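(* The model-theoretic semantics and the fixed-point semantics of $\mathcal{DL}_S$ are equivalent: for every $\mathcal{DL}_S$ program $P$, the least fixed point of the immediate consequence operator $\mathit{IC}_P$ equals the denotation $D(P)=\bigcap_{I\in\mathbf{M}(P)} I$, where $\mathbf{M}(P)$ is the set of all Herbrand models of $P$.
   Context: Fix a set $\mathit{Lit}$ of literals, a set of variables, and relation symbols, each with a fixed arity. Values: $\mathit{Val} ::= R(v_1,\ldots,v_n) \mid \ell$ with $R$ of arity $n$, $v_i\in\mathit{Val}$, $\ell\in\mathit{Lit}$. Facts are values of the form $R(v_1,\ldots,v_n)$ (possibly nested). Terms: $t ::= R(t_1,\ldots,t_n)\mid x \mid \ell$, $x$ a variable. A $\mathcal{DL}_S$ rule $R$ has a head clause $\mathit{Head}(R)=Q(t_1,\ldots,t_n)$ and a finite set $\mathit{Body}(R)$ of body clauses of the form $\mathit{id}=Q(t_1,\ldots,t_n)$ ($\mathit{id}$ a variable naming the matched fact); every head variable occurs in the body. A program $P$ is a finite set of rules. A substitution $\sigma$ maps variables to values; for a set of facts $I$, $\mathit{Body}(R)\sigma\subseteq I$ means that for each body clause $\mathit{id}=Q(\vec t)$, $Q(\vec t)\sigma\in I$ and $\sigma(\mathit{id})=Q(\vec t)\sigma$. $\mathit{subfact}(R(v_1,\ldots,v_n))=\{R(v_1,\ldots,v_n)\}\cup\bigcup_i\mathit{subfact}(v_i)$, $\mathit{subfact}(\ell)=\emptyset$ for literals; a set of facts $I$ is subfact-closed if $I=\bigcup\{\mathit{subfact}(f)\mid f\in I\}$.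 A database is a set of facts, ordered by inclusion. $\mathit{IC}_R(\mathit{db})=\mathit{db}\cup\bigcup\{\mathit{subfact}(\mathit{Head}(R)\sigma)\mid \mathit{Body}(R)\sigma\subseteq\mathit{db}\}$ and $\mathit{IC}_P(\mathit{db})=\mathit{db}\cup\bigcup_{R\in P}\mathit{IC}_R(\mathit{db})$; $\mathit{IC}_P$ is monotone, so it has a least fixed point. The Herbrand universe of $P$ is the set of all facts constructible from the relation symbols appearing in $P$ (and literals). A Herbrand interpretation is a subfact-closed subset $I$ of the Herbrand universe. $I\models R$ iff for every substitution $\sigma$, $\mathit{Body}(R)\sigma\subseteq I$ implies $\mathit{Head}(R)\sigma\in I$. A Herbrand model of $P$ is a Herbrand interpretation in which every rule of $P$ is true. *)

(* Defs.v *)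
From Stdlib Require Import List.
Import ListNotations.

Section DLS.

Variables (Lit Var Sym : Type) (arity : Sym -> nat).

(* Values: R(v1,...,vn) | literal.  Arity is enforced by [wf_val]. *)
Inductive Val : Type :=
| VRel : Sym -> list Val -> Val
| VLit : Lit -> Val.

Inductive wf_val : Val -> Prop :=
| wf_lit : forall l, wf_val (VLit l)
| wf_rel : forall R vs, length vs = arity R -> Forall wf_val vs -> wf_val (VRel R vs).

Definition is_fact (v : Val) : Prop :=
  wf_val v /\ exists R vs, v = VRel R vs.

Inductive Term : Type :=
| TRel : Sym -> list Term -> Term
| TVar : Var -> Term
| TLit : Lit -> Term.

Inductive wf_term : Term -> Prop :=
| wft_var : forall x, wf_term (TVar x)
| wft_lit : forall l, wf_term (TLit l)
| wft_rel : forall R ts, length ts = arity R -> Forall wf_term ts -> wf_term (TRel R ts).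

Inductive var_in_term (x : Var) : Term -> Prop :=
| vit_var : var_in_term x (TVar x)
| vit_rel : forall R ts t, In t ts -> var_in_term x t -> var_in_term x (TRel R ts).

Inductive sym_in_term (S : Sym) : Term -> Prop :=
| sit_here : forall ts, sym_in_term S (TRel S ts)
| sit_arg : forall R ts t, In t ts -> sym_in_term S t -> sym_in_term S (TRel R ts).

Record Atom := mkAtom { atom_rel : Sym; atom_args : list Term }.

Definition atom_term (a : Atom) : Term := TRel (atom_rel a) (atom_args a).

(* A rule: head clause and a finite set of body clauses id = Q(t1..tn). *)
Record Rule := mkRule { head : Atom; body : list (Var * Atom) }.

Definition Program := list Rule.

Definition wf_rule (r : Rule) : Prop :=
  wf_term (atom_term (head r)) /\
  (forall b, In b (body r) -> wf_term (atom_term (snd b))) /\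
  (forall x, var_in_term x (atom_term (head r)) ->
     exists b, In b (body r) /\ (fst b = x \/ var_in_term x (atom_term (snd b)))).

Definition wf_program (P : Program) : Prop := forall r, In r P -> wf_rule r.

Definition Subst := Var -> Val.
Definition wf_subst (s : Subst) : Prop := forall x, wf_val (s x).

Fixpoint subst_term (s : Subst) (t : Term) : Val :=
  match t with
  | TRel R ts => VRel R (map (subst_term s) ts)
  | TVar x => s x
  | TLit l => VLit l
  end.

Definition subst_atom (s : Subst) (a : Atom) : Val := subst_term s (atom_term a).

Definition VSet := Val -> Prop.
Definition subset (A B : VSet) : Prop := forall v, A v -> B v.
Definition set_eq (A B : VSet) : Prop := forall v, A v <-> B v.

Definition is_database (db : VSet) : Prop := forall v, db v -> is_fact v.

Definition body_sat (r : Rule) (s : Subst) (I : VSet) : Prop :=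
  forall b, In b (body r) ->
    I (subst_atom s (snd b)) /\ s (fst b) = subst_atom s (snd b).

Inductive subfact : Val -> Val -> Prop :=
| subfact_self : forall R vs, subfact (VRel R vs) (VRel R vs)
| subfact_arg : forall g R vs v, In v vs -> subfact g v -> subfact g (VRel R vs).

Definition subfact_closed (I : VSet) : Prop :=
  set_eq I (fun g => exists f, I f /\ subfact g f).

Definition IC_R (r : Rule) (db : VSet) : VSet :=
  fun v => db v \/
    exists s, wf_subst s /\ body_sat r s db /\ subfact v (subst_atom s (head r)).

Definition IC_P (P : Program) (db : VSet) : VSet :=
  fun v => db v \/ exists r, In r P /\ IC_R r db v.

Definition sym_in_rule (S : Sym) (r : Rule) : Prop :=
  sym_in_term S (atom_term (head r)) \/
  exists b, In b (body r) /\ sym_in_term S (atom_term (snd b)).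

Definition sym_in_program (S : Sym) (P : Program) : Prop :=
  exists r, In r P /\ sym_in_rule S r.

Inductive sym_in_val (S : Sym) : Val -> Prop :=
| siv_here : forall vs, sym_in_val S (VRel S vs)
| siv_arg : forall R vs v, In v vs -> sym_in_val S v -> sym_in_val S (VRel R vs).

Definition herbrand_universe (P : Program) : VSet :=
  fun v => is_fact v /\ forall S, sym_in_val S v -> sym_in_program S P.

Definition herbrand_interp (P : Program) (I : VSet) : Prop :=
  subset I (herbrand_universe P) /\ subfact_closed I.

Definition rule_true (I : VSet) (r : Rule) : Prop :=
  forall s, wf_subst s -> body_sat r s I -> I (subst_atom s (head r)).

Definition herbrand_model (P : Program) (I : VSet) : Prop :=
  herbrand_interp P I /\ forall r, In r P -> rule_true I r.

Definition denotation (P : Program) : VSet :=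
  fun v => forall I, herbrand_model P I -> I v.

Definition is_least_fixpoint (F : VSet -> VSet) (X : VSet) : Prop :=
  is_database X /\ set_eq (F X) X /\
  forall Y, is_database Y -> set_eq (F Y) Y -> subset X Y.

End DLS.

Arguments VRel {Lit Sym}.
Arguments VLit {Lit Sym}.

(* Main.v *)
Require Import Defs.
From Stdlib Require Import List.
Import ListNotations.

Section Proofs.
Variables (Lit Var Sym : Type) (arity : Sym -> nat) (P : Program Lit Var Sym).

Notation Val := (Val Lit Sym).
Notation Term := (Term Lit Var Sym).

Fixpoint term_ind' (Q : Term -> Prop)
  (Hrel : forall R ts, Forall Q ts -> Q (TRel _ _ _ R ts))
  (Hvar : forall x, Q (TVar _ _ _ x)) (Hlit : forall l, Q (TLit _ _ _ l))
  (t : Term) : Q t :=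
  match t with
  | TRel _ _ _ R ts => Hrel R ts ((fix F l := match l return Forall Q l with
        | nil => Forall_nil _
        | x :: l' => Forall_cons _ (term_ind' Q Hrel Hvar Hlit x) (F l') end) ts)
  | TVar _ _ _ x => Hvar x
  | TLit _ _ _ l => Hlit l
  end.

Lemma subst_wf (s : Subst Lit Var Sym) : wf_subst _ _ _ arity s ->
  forall t, wf_term _ _ _ arity t -> wf_val _ _ arity (subst_term _ _ _ s t).
Proof.
  intros Hs t; induction t using term_ind'; intros Hw; simpl.
  - inversion Hw; subst. constructor.
    + rewrite length_map; auto.
    + rewrite Forall_forall in *. intros v Hv. apply in_map_iff in Hv.
      destruct Hv as [t [<- Ht]]. auto.
  - apply Hs.
  - constructor.
Qed.

Lemma subst_sym (s : Subst Lit Var Sym) S t :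
  sym_in_val _ _ S (subst_term _ _ _ s t) ->
  sym_in_term _ _ _ S t \/ exists x, var_in_term _ _ _ x t /\ sym_in_val _ _ S (s x).
Proof.
  induction t using term_ind'; simpl; intros Hs.
  - inversion Hs; subst.
    + left; constructor.
    + apply in_map_iff in H2. destruct H2 as [t [<- Ht]].
      rewrite Forall_forall in H. destruct (H t Ht H3) as [H1|[x [H1 H2]]].
      * left; eapply sit_arg; eauto.
      * right; exists x; split; auto. eapply vit_rel; eauto.
  - right; exists x; split; auto; constructor.
  - inversion Hs.
Qed.

Lemma var_sym (s : Subst Lit Var Sym) S x t :
  var_in_term _ _ _ x t -> sym_in_val _ _ S (s x) ->
  sym_in_val _ _ S (subst_term _ _ _ s t).
Proof.
  induction 1; simpl; intros; auto.
  eapply siv_arg; [apply in_map; exact H|]; auto.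
Qed.

Lemma subfact_rel (g f : Val) : subfact _ _ g f -> exists R vs, g = VRel R vs.
Proof. induction 1; eauto. Qed.

Lemma subfact_wf (g f : Val) : subfact _ _ g f -> wf_val _ _ arity f -> wf_val _ _ arity g.
Proof.
  induction 1; auto. intros Hw; inversion Hw; subst.
  rewrite Forall_forall in H4. auto.
Qed.

Lemma subfact_sym (g f : Val) S : subfact _ _ g f -> sym_in_val _ _ S g -> sym_in_val _ _ S f.
Proof. induction 1; auto. intros; eapply siv_arg; eauto. Qed.

Lemma subfact_trans (a b c : Val) : subfact _ _ a b -> subfact _ _ b c -> subfact _ _ a c.
Proof. intros H1 H2; induction H2; auto. eapply subfact_arg; eauto. Qed.

Inductive Der : Val -> Prop :=
| derive : forall r s v, In r P -> wf_subst _ _ _ arity s ->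
    (forall b, In b (body _ _ _ r) -> Der (subst_atom _ _ _ s (snd b))) ->
    (forall b, In b (body _ _ _ r) -> s (fst b) = subst_atom _ _ _ s (snd b)) ->
    subfact _ _ v (subst_atom _ _ _ s (Defs.head _ _ _ r)) -> Der v.

Lemma Der_univ : wf_program _ _ _ arity P ->
  forall v, Der v -> herbrand_universe _ _ _ arity P v.
Proof.
  intros HP v HD. induction HD as [r s v Hr Hs Hb IH Heq Hsub].
  destruct (HP r Hr) as [Hwh [Hwb Hvars]].
  assert (Hhead : herbrand_universe _ _ _ arity P (subst_atom _ _ _ s (Defs.head _ _ _ r))).
  { split.
    - split. apply subst_wf; auto.
      unfold subst_atom, atom_term; simpl; eauto.
    - intros S HS. unfold subst_atom in HS.
      destruct (subst_sym s S _ HS) as [H1|[x [H1 H2]]].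
      + exists r; split; auto. left; auto.
      + destruct (Hvars x H1) as [b [Hb' [Hx|Hx]]].
        * subst x. rewrite (Heq b Hb') in H2. apply (IH b Hb'); auto.
        * apply (IH b Hb'). unfold subst_atom. eapply var_sym; eauto. }
  destruct Hhead as [[Hw _] Hsy]. split.
  - split. eapply subfact_wf; eauto. eapply subfact_rel; eauto.
  - intros S HS. apply Hsy. eapply subfact_sym; eauto.
Qed.

Lemma Der_model : wf_program _ _ _ arity P -> herbrand_model _ _ _ arity P Der.
Proof.
  intros HP. split; [split|].
  - intros v Hv; apply Der_univ; auto.
  - intros v; split.
    + intros Hv. exists v; split; auto.
      destruct (proj1 (Der_univ HP v Hv)) as [_ [R [vs ->]]]; constructor.
    + intros [f [Hf Hs]]. destruct Hf as [r s f Hr Hs' Hb Heq Hsub].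
      eapply derive; eauto. eapply subfact_trans; eauto.
  - intros r Hr s Hs Hb. eapply derive; eauto.
    + intros b Hb'; apply (Hb b Hb').
    + intros b Hb'; apply (Hb b Hb').
    + unfold subst_atom, atom_term; simpl; constructor.
Qed.

Lemma Der_least Y : set_eq _ _ (IC_P _ _ _ arity P Y) Y -> forall v, Der v -> Y v.
Proof.
  intros HY v HD. induction HD as [r s v Hr Hs Hb IH Heq Hsub].
  apply HY. right. exists r; split; auto. right. exists s; split; auto.
  split; auto. intros b Hb'; split; auto.
Qed.

End Proofs.

Theorem mainTheorem5 (Lit Var Sym : Type) (arity : Sym -> nat)
  (P : Program Lit Var Sym) :
  wf_program Lit Var Sym arity P ->
  is_least_fixpoint Lit Sym arity
    (IC_P Lit Var Sym arity P) (denotation Lit Var Sym arity P).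
Proof.
  intros HP. pose proof (Der_model _ _ _ _ _ HP) as HM.
  split; [|split].
  - intros v Hv. exact (proj1 (Der_univ _ _ _ _ _ HP v (Hv _ HM))).
  - intros v; split.
    + intros [Hv|[r [Hr [Hv|[s [Hs [Hb Hsub]]]]]]]; auto.
      intros I HI. destruct HI as [[HIu Hcl] Hrules].
      apply Hcl. exists (subst_atom _ _ _ s (Defs.head _ _ _ r)). split; auto.
      apply (Hrules r Hr s Hs). intros b Hb'. destruct (Hb b Hb') as [H1 H2]; split; [exact (H1 I (conj (conj HIu Hcl) Hrules))|exact H2].
    + intros Hv; left; auto.
  - intros Y _ HY v Hv. apply (Der_least _ _ _ _ _ _ HY). apply Hv; auto.
Qed.
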